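(* Let $Q$ be a conjunctive query over $\mathcal{D}^p$, $D^p$ an instance of $\mathcal{D}^p$ (consistent w.r.t. a set $\mathcal{IC}$ of denial constraints), and $\vec t$ an answer of $Q$ with minimum probability $p^{\min}$ and maximum probability $p^{\max}$. Let $m$ be the number of tuples in $D^p$ plus $3$, and $a$ the maximum among the numerators and denominators of the probabilities of the tuples of $D^p$. Then $p^{\min}$ and $p^{\max}$ are expressible as fractions $\eta/\delta$ with integers $0\le\eta\le(ma)^m$ and $0<\delta\le(ma)^m$.
   Context: A PDB instance $D^p$ of a schema $\mathcal{D}^p$ is a finite set of tuples, each with a rational probability $p(t)\in[0,1]$ given as a fraction. Possible worlds are subsets of its tuples; an interpretation is a probability distribution on possible worlds such that the total probability of worlds containing $t$ is $p(t)$. A model w.r.t. a set $\mathcal{IC}$ of denial constraints is an interpretation assigning probability $0$ to every world violating $\mathcal{IC}$. A conjunctive query is $Q(\vec x)=\exists\vec z.\,R_1(\vec y_1)\wedge\dots\wedge R_m(\vec y_m)\wedge\phi$, $\phi$ a conjunction of comparisons. For a model $M$ and ground tuple $\vec t$, $p^M_Q(\vec t)$ is the total $M$-probability of worlds $w$ with $w\models Q(\vec t)$. $\vec t$ is an answer of $Q$ with minimum probability $p^{\min}=\min_M p^M_Q(\vec t)$ and maximum probability $p^{\max}=\max_M p^M_Q(\vec t)$ over all models $M$ (where $\vec t$ is required to satisfy $w\models Q(\vec t)$ for some possible world $w$). *)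

(* Defs.v *)
From HB Require Import structures.
From mathcomp Require Import all_boot all_order all_algebra.
From mathcomp Require Import boolp reals.
Set Implicit Arguments. Unset Strict Implicit. Unset Printing Implicit Defensive.
Import Order.TTheory GRing.Theory Num.Theory.
Local Open Scope ring_scope.

(* Data values are rationals (a totally ordered domain for comparisons). *)
(* A fact (ground tuple) of the database: relation symbol and its values. *)
Definition fact := (nat * seq rat)%type.

Inductive term := TVar of nat | TCst of rat.
Inductive cmpop := CEq | CNeq | CLt | CLe.

Definition atom := (nat * seq term)%type.
Definition comparison := (cmpop * term * term)%type.

(* Conjunctive query Q(x) = exists z. R1(y1) /\ ... /\ Rm(ym) /\ phi.
   cq_free lists the free variables x (in order); every other variable
   occurring in the atoms/comparisons is existentially quantified. *)
Record cq := CQ { cq_free : seq nat; cq_atoms : seq atom; cq_cmps : seq comparison }.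

(* Denial constraint: not (exists z. R1(y1) /\ ... /\ Rk(yk) /\ phi). *)
Record denial := DC { dc_atoms : seq atom; dc_cmps : seq comparison }.

Definition eval_term (nu : nat -> rat) (t : term) : rat :=
  match t with TVar x => nu x | TCst c => c end.

Definition cmp_holds (nu : nat -> rat) (c : comparison) : Prop :=
  let: (o, t1, t2) := c in
  let v1 := eval_term nu t1 in let v2 := eval_term nu t2 in
  match o with
  | CEq => v1 = v2
  | CNeq => v1 <> v2
  | CLt => v1 < v2
  | CLe => v1 <= v2
  end.

(* The body (atoms and comparisons) holds in world w (a subset of the tuples
   'I_n, tup i being the i-th tuple) under the valuation nu. *)
Definition body_holds (n : nat) (tup : 'I_n -> fact) (w : {set 'I_n})
    (atoms : seq atom) (cmps : seq comparison) (nu : nat -> rat) : Prop :=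
  foldr (fun a P => (exists i, i \in w /\ tup i = (a.1, map (eval_term nu) a.2)) /\ P)
        True atoms /\
  foldr (fun c P => cmp_holds nu c /\ P) True cmps.

Definition sat_cq (n : nat) (tup : 'I_n -> fact) (Q : cq) (t : seq rat)
    (w : {set 'I_n}) : Prop :=
  exists nu, map nu (cq_free Q) = t /\ body_holds tup w (cq_atoms Q) (cq_cmps Q) nu.

Definition violates (n : nat) (tup : 'I_n -> fact) (IC : seq denial)
    (w : {set 'I_n}) : Prop :=
  foldr (fun d P => (exists nu, body_holds tup w (dc_atoms d) (dc_cmps d) nu) \/ P)
        False IC.

Definition interpretation (R : realType) (n : nat) (prob : 'I_n -> rat)
    (M : {ffun {set 'I_n} -> R}) : Prop :=
  (forall w, 0 <= M w) /\ \sum_(w : {set 'I_n}) M w = 1 /\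
  forall i : 'I_n, \sum_(w : {set 'I_n} | i \in w) M w = ratr (prob i).

Definition model (R : realType) (n : nat) (tup : 'I_n -> fact) (prob : 'I_n -> rat)
    (IC : seq denial) (M : {ffun {set 'I_n} -> R}) : Prop :=
  interpretation prob M /\ forall w, violates tup IC w -> M w = 0.

Definition consistent (R : realType) (n : nat) (tup : 'I_n -> fact)
    (prob : 'I_n -> rat) (IC : seq denial) : Prop :=
  exists M : {ffun {set 'I_n} -> R}, model tup prob IC M.

Definition probQ (R : realType) (n : nat) (tup : 'I_n -> fact) (Q : cq) (t : seq rat)
    (M : {ffun {set 'I_n} -> R}) : R :=
  \sum_(w : {set 'I_n} | `[< sat_cq tup Q t w >]) M w.

Definition is_min_prob (R : realType) (n : nat) (tup : 'I_n -> fact) (prob : 'I_n -> rat)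
    (IC : seq denial) (Q : cq) (t : seq rat) (p : R) : Prop :=
  (exists M, model tup prob IC M /\ probQ tup Q t M = p) /\
  forall M, model tup prob IC M -> p <= probQ tup Q t M.

Definition is_max_prob (R : realType) (n : nat) (tup : 'I_n -> fact) (prob : 'I_n -> rat)
    (IC : seq denial) (Q : cq) (t : seq rat) (p : R) : Prop :=
  (exists M, model tup prob IC M /\ probQ tup Q t M = p) /\
  forall M, model tup prob IC M -> probQ tup Q t M <= p.

Definition max_numden (n : nat) (prob : 'I_n -> rat) : nat :=
  \max_(i < n) maxn `|numq (prob i)|%N `|denq (prob i)|%N.

Definition bounded_fraction (R : realType) (B : nat) (p : R) : Prop :=
  exists eta delta : nat,
    (eta <= B)%N /\ (0 < delta <= B)%N /\ p = eta%:R / delta%:R.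

(* Main.v *)
Require Import Defs.
From HB Require Import structures.
From mathcomp Require Import all_boot all_order all_algebra all_fingroup.
From mathcomp Require Import boolp reals.
From mathcomp Require Import lra.
Import Order.TTheory GRing.Theory Num.Theory.
Local Open Scope ring_scope.
Set Implicit Arguments. Unset Strict Implicit. Unset Printing Implicit Defensive.


Section Main.
Variables (R : realType) (n : nat) (tup : 'I_n -> fact) (prob : 'I_n -> rat)
    (IC : seq denial) (Q : cq) (t : seq rat).

Definition kdir (d : {ffun {set 'I_n} -> R}) :=
  \sum_(w : {set 'I_n}) d w = 0 /\ forall i : 'I_n, \sum_(w : {set 'I_n} | i \in w) d w = 0.

Definition shift (M d : {ffun {set 'I_n} -> R}) (lam : R) : {ffun {set 'I_n} -> R} :=
  [ffun w => M w + lam * d w].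

Lemma shift_model M d lam : model tup prob IC M -> kdir d ->
  (forall w, M w = 0 -> d w = 0) -> (forall w, 0 <= shift M d lam w) ->
  model tup prob IC (shift M d lam).
Proof.
move=> [[M0 [M1 Mm]] Mv] [d1 dm] dz pos; split; [split; [|split]|].
- exact: pos.
- under eq_bigr do rewrite ffunE.
  by rewrite big_split /= -mulr_sumr d1 mulr0 addr0.
- move=> i; under eq_bigr do rewrite ffunE.
  by rewrite big_split /= -mulr_sumr dm mulr0 addr0.
- by move=> w /Mv Mw0; rewrite ffunE Mw0 (dz _ Mw0) mulr0 addr0.
Qed.

Lemma shift_probQ M d lam :
  probQ tup Q t (shift M d lam) = probQ tup Q t M + lam * \sum_(w : {set 'I_n} | `[< sat_cq tup Q t w >]) d w.
Proof.
by rewrite /probQ; under eq_bigr do rewrite ffunE; rewrite big_split /= -mulr_sumr.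
Qed.

Lemma perturb M d : model tup prob IC M -> kdir d ->
  (forall w, M w = 0 -> d w = 0) -> (exists w, d w < 0) ->
  exists lam, 0 < lam /\ (forall w, 0 <= shift M d lam w) /\
    exists w1, M w1 != 0 /\ shift M d lam w1 = 0.
Proof.
move=> [[M0 _] _] _ dz [w0 dw0].
pose F w := M w / - d w.
case: (@Order.TotalTheory.arg_minP _ _ _ w0 (fun w => d w < 0) F dw0) => w1 dw1 Hmin.
have Mw1 : 0 < M w1.
  rewrite lt_def M0 andbT; apply/eqP => /dz dd; by rewrite dd ltxx in dw1.
have ndw1 : 0 < - d w1 by rewrite oppr_gt0.
exists (F w1); split; first by rewrite /F divr_gt0.
split.
- move=> w; rewrite ffunE.
  case: (ltP (d w) 0) => dw.
  + have := Hmin w dw; rewrite /F => H.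
    have ndw : 0 < - d w by rewrite oppr_gt0.
    rewrite -(ler_pM2r ndw) in H.
    rewrite mulfVK ?gt_eqF // in H.
    by rewrite -(opprK (F w1 * d w)) -mulrN subr_ge0.
  + by rewrite addr_ge0 // mulr_ge0 // /F divr_ge0 // ltW.
- exists w1; split; first by rewrite gt_eqF.
  rewrite ffunE /F invrN mulrN mulNr -mulrA mulVf ?mulr1 ?subrr //; by rewrite lt_eqF.
Qed.

Definition suppM (M : {ffun {set 'I_n} -> R}) := [set w | M w != 0].

Lemma kdirN d : kdir d -> kdir [ffun w => - d w].
Proof.
move=> [d1 dm]; split.
- by under eq_bigr do rewrite ffunE; rewrite sumrN d1 oppr0.
- by move=> i; under eq_bigr do rewrite ffunE; rewrite sumrN dm oppr0.
Qed.

Lemma kdir_neg d : kdir d -> (exists w, d w != 0) -> exists w, d w < 0.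
Proof.
move=> [d1 _] [w dw]; apply/not_existsP => H.
have /psumr_eq0P Hz : \sum_(w : {set 'I_n} | true) d w = 0 by [].
have : d w = 0.
  apply: Hz => // w' _; rewrite leNgt; apply/negP => h; exact: (H w').
by move/eqP: dw.
Qed.

Lemma reduce (p : R) :
  ((forall M, model tup prob IC M -> p <= probQ tup Q t M) \/
   (forall M, model tup prob IC M -> probQ tup Q t M <= p)) ->
  forall k M, (#|suppM M| <= k)%N -> model tup prob IC M -> probQ tup Q t M = p ->
  exists M', model tup prob IC M' /\ probQ tup Q t M' = p /\
    (forall d, kdir d -> (forall w, M' w = 0 -> d w = 0) -> forall w, d w = 0).
Proof.
move=> Hopt; elim=> [|k IH] M sM mM pM.
  exists M; split=> //; split=> // d _ dz w; apply: dz.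
  move: sM; rewrite leqn0 => /eqP /cards0_eq /setP /(_ w).
  by rewrite !inE => /negbFE /eqP.
case: (pselect (forall d, kdir d -> (forall w, M w = 0 -> d w = 0) -> forall w, d w = 0)) => [H|].
  by exists M.
move=> /existsNP [d /not_implyP [kd /not_implyP [dz /existsNP [w0 dw0]]]].
have dne : exists w, d w != 0 by exists w0; apply/eqP.
have [lam1 [l1 [pos1 [w1 [Mw1 Sw1]]]]] := perturb mM kd dz (kdir_neg kd dne).
have kdN := kdirN kd.
have dzN : forall w, M w = 0 -> [ffun w => - d w] w = 0.
  by move=> w /dz; rewrite ffunE => ->; rewrite oppr0.
have dneN : exists w, [ffun w => - d w] w != 0.
  by exists w0; rewrite ffunE oppr_eq0; apply/eqP.
have [lam2 [l2 [pos2 _]]] := perturb mM kdN dzN (kdir_neg kdN dneN).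
have m1 := shift_model mM kd dz pos1.
have m2 := shift_model mM kdN dzN pos2.
set c := \sum_(w : {set 'I_n} | `[< sat_cq tup Q t w >]) d w.
have q1 : probQ tup Q t (shift M d lam1) = p + lam1 * c by rewrite shift_probQ pM.
have q2 : probQ tup Q t (shift M [ffun w => - d w] lam2) = p - lam2 * c.
  rewrite shift_probQ pM; under eq_bigr do rewrite ffunE.
  by rewrite sumrN mulrN.
have c0 : c = 0.
  case: Hopt => H.
  - have := H _ m1; have := H _ m2; rewrite q1 q2 => h2 h1.
    have e1 : 0 <= lam1 * c by lra.
    have e2 : lam2 * c <= 0 by lra.
    rewrite pmulr_rge0 // in e1; rewrite pmulr_rle0 // in e2.
    by apply/eqP; rewrite eq_le e1 e2.
  - have := H _ m1; have := H _ m2; rewrite q1 q2 => h2 h1.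
    have e1 : lam1 * c <= 0 by lra.
    have e2 : 0 <= lam2 * c by lra.
    rewrite pmulr_rge0 // in e2; rewrite pmulr_rle0 // in e1.
    by apply/eqP; rewrite eq_le e1 e2.
apply: (IH (shift M d lam1)) => //; last by rewrite q1 c0 mulr0 addr0.
rewrite -ltnS; apply: leq_trans sM; apply: proper_card; apply/properP; split.
  apply/subsetP => w; rewrite !inE; apply: contraNN => /eqP Mw.
  by rewrite ffunE Mw (dz _ Mw) mulr0 addr0.
by exists w1; rewrite !inE ?Mw1 // Sw1 eqxx.
Qed.
End Main.


Lemma det01_bound k (A : 'M[int]_k) : (forall i j, 0 <= A i j <= 1) -> (`|\det A| <= k`!)%N.
Proof.
move=> H.
have : `|\det A| <= (k`!)%:R :> int.
  rewrite /determinant; apply: le_trans (ler_norm_sum _ _ _) _.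
  rewrite -card_Sn -sumr_const; apply: ler_sum => s _.
  rewrite normrM normrX normrN1 expr1n mul1r.
  rewrite ger0_norm; last by apply: prodr_ge0 => i _; case/andP: (H i (s i)).
  by apply: prodr_ile1 => i _; exact: H.
move=> h; rewrite -lez_nat abszE. by rewrite natz in h.
Qed.

Lemma fact_le_pow k : (k`! <= k ^ k)%N.
Proof.
elim: k => // k IH; rewrite factS expnS leq_mul2l /=.
apply: leq_trans IH _; case: k => // k; by rewrite leq_exp2r.
Qed.

Section B.
Variables (R : realType) (n : nat) (tup : 'I_n -> fact) (prob : 'I_n -> rat)
    (IC : seq denial) (Q : cq) (t : seq rat).

Definition rr (i : 'I_n.+1) (w : {set 'I_n}) : bool :=
  if unlift ord0 i is Some i' then i' \in w else true.
Definition bb (i : 'I_n.+1) : R :=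
  if unlift ord0 i is Some i' then ratr (prob i') else 1.

Lemma sumsel (b : {set 'I_n} -> bool) (F : {set 'I_n} -> R) :
  \sum_(w : {set 'I_n}) (b w)%:R * F w = \sum_(w : {set 'I_n} | b w) F w.
Proof.
by rewrite [RHS]big_mkcond; apply: eq_bigr => w _; case: (b w); rewrite ?mul1r ?mul0r.
Qed.

Lemma model_rows M : model tup prob IC M ->
  forall i, \sum_(w : {set 'I_n}) (rr i w)%:R * M w = bb i.
Proof.
move=> [[_ [M1 Mm]] _] i; rewrite sumsel /rr /bb.
by have [j _|_] := unliftP ord0 i; rewrite ?Mm.

Qed.

Lemma kdir_rows (d : {ffun {set 'I_n} -> R}) :
  (forall i, \sum_(w : {set 'I_n}) (rr i w)%:R * d w = 0) -> kdir d.
Proof.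
move=> H; split.
  by have := H ord0; rewrite sumsel /rr unlift_none.
by move=> i; have := H (lift ord0 i); rewrite sumsel /rr liftK.
Qed.

Definition DN : nat := \prod_(i < n) `|denq (prob i)|%N.
Definition bint (i : 'I_n.+1) : int :=
  if unlift ord0 i is Some i' then numq (prob i') * (\prod_(l < n | l != i') `|denq (prob l)|%N)%:Z
  else (DN%:Z).

Lemma bintE i : bb i * (DN%:R) = (bint i)%:~R.
Proof.
rewrite /bb /bint; have [j _|_] := unliftP ord0 i; last by rewrite mul1r.
rewrite /DN (bigD1 j) //= natrM mulrA /ratr rmorphM /=.
congr (_ * _); rewrite natr_absz ger0_norm ?ltW ?denq_gt0 // mulfVK //.
by rewrite intr_eq0 denq_neq0.
Qed.

Lemma indep_frac (M : {ffun {set 'I_n} -> R}) : model tup prob IC M ->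
  (forall d : {ffun {set 'I_n} -> R}, kdir d -> (forall w, M w = 0 -> d w = 0) -> forall w, d w = 0) ->
  exists (Z dz : int), dz != 0 /\ (`|dz| <= n.+1`!)%N /\
    probQ tup Q t M * (dz%:~R * DN%:R) = Z%:~R.
Proof.
move=> mM indep.
set S := suppM M.
pose e : 'I_#|S| -> {set 'I_n} := enum_val.
have eS : forall j, M (e j) != 0.
  by move=> j; have := enum_valP j; rewrite inE.
have keysum : forall g : {set 'I_n} -> R,
    \sum_(w : {set 'I_n}) g w * M w = \sum_(j < #|S|) g (e j) * M (e j).
  move=> g; rewrite (bigID (mem S)) /= [X in _ + X]big1 ?addr0.
    by rewrite (big_enum_val (fun w => g w * M w)).
  by move=> w; rewrite inE negbK => /eqP ->; rewrite mulr0.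
pose CZ : 'M[int]_(#|S|, n.+1) := \matrix_(j, i) ((rr i (e j) : nat)%:Z).
pose C := map_mx (fun z : int => z%:~R : R) CZ.
have rfC : row_free C.
  apply: inj_row_free => v vC.
  pose d := [ffun w => \sum_(j | e j == w) v 0 j].
  have dsum : forall g : {set 'I_n} -> R,
      \sum_(w : {set 'I_n}) g w * d w = \sum_j g (e j) * v 0 j.
    move=> g; under eq_bigr do rewrite ffunE mulr_sumr big_mkcond.
    rewrite exchange_big /=; apply: eq_bigr => j _.
    rewrite -big_mkcond /=; under eq_bigl do rewrite eq_sym.
    by rewrite big_pred1_eq.
  have kd : kdir d.
    apply: kdir_rows => i; rewrite dsum.
    have := congr1 (fun A : 'rV[R]_n.+1 => A 0 i) vC; rewrite !mxE => h; apply: eq_trans h.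
    by apply: eq_bigr => j _; rewrite !mxE mulrC.
  have dz : forall w, M w = 0 -> d w = 0.
    move=> w Mw; rewrite ffunE big1 // => j /eqP ejw.
    by move: (eS j); rewrite ejw Mw eqxx.
  apply/rowP => j; rewrite mxE.
  have := indep d kd dz (e j); rewrite ffunE.
  under eq_bigl do rewrite (inj_eq (@enum_val_inj _ _)).
  by rewrite big_pred1_eq.
have fA : row_full C^T by rewrite /row_full mxrank_tr.
pose f := fullrankfun fA.
pose B := rowsub f C^T.
have uB : B \in unitmx := fullrowsub_unit fA.
pose BZ := rowsub f CZ^T.
have BE : B = map_mx (fun z : int => z%:~R : R) BZ by apply/matrixP => i j; rewrite !mxE.
have kle : (#|S| <= n.+1)%N.
  have finj : injective (fun j : 'I_#|S| => f j) by move=> a b /(@fullrankfun_inj _ _ _ _ fA).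
  by have := @leq_card _ _ _ finj; rewrite !card_ord.
pose x : 'cV[R]_#|S| := \col_j M (e j).
pose b' : 'cV[R]_#|S| := \col_j bb (f j).
have Bx : B *m x = b'.
  apply/colP => j; rewrite !mxE -(model_rows mM) keysum.
  by apply: eq_bigr => l _; rewrite !mxE.
have adjx : (\det B) *: x = \adj B *m b'.
  by rewrite -Bx mulmxA mul_adj_mx mul_scalar_mx.
pose c j : nat := `[< sat_cq tup Q t (e j) >].
have pQ : probQ tup Q t M = \sum_j (c j)%:R * x j 0.
  rewrite /probQ -(sumsel (fun w => `[< sat_cq tup Q t w >])) keysum.
  by apply: eq_bigr => j _; rewrite mxE.
pose adjZ := \adj BZ.
have adjE : \adj B = map_mx (fun z : int => z%:~R : R) adjZ by rewrite BE map_mx_adj.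
have detE : \det B = (\det BZ)%:~R by rewrite BE det_map_mx.
have hj : forall j, \det B * x j 0 = \sum_i (adjZ j i)%:~R * bb (f i).
  move=> j; have := congr1 (fun A : 'cV[R]_#|S| => A j 0) adjx.
  rewrite !mxE => ->; apply: eq_bigr => i _; by rewrite adjE !mxE.
exists (\sum_j (c j)%:Z * \sum_i adjZ j i * bint (f i)), (\det BZ).
split.
  by move: uB; rewrite unitmxE unitfE detE intr_eq0.
split.
  apply: leq_trans (det01_bound _) (leq_fact kle) => i j; rewrite !mxE.
  by case: rr.
rewrite pQ -detE mulr_suml rmorph_sum; apply: eq_bigr => j _ /=.
rewrite rmorphM rmorph_sum /= -mulrA.
have ee : x j 0 * (\det B * DN%:R) = (\det B * x j 0) * DN%:R by rewrite mulrA (mulrC (x j 0)).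
rewrite ee hj mulr_suml; congr (_ * _); apply: eq_bigr => i _.
by rewrite rmorphM /= -bintE mulrA.
Qed.
End B.


Lemma DN_bound n (prob : 'I_n -> rat) : (DN prob <= (max_numden prob) ^ n)%N.
Proof.
rewrite /DN; apply: (@leq_trans (\prod_(i < n) max_numden prob)).
  apply: leq_prod => i _; apply: leq_trans (leq_maxr `|numq (prob i)|%N _) _.
  exact: (@leq_bigmax _ (fun i : 'I_n => maxn `|numq (prob i)|%N `|denq (prob i)|%N) i).
by rewrite prod_nat_const card_ord.
Qed.

Lemma DN_gt0 n (prob : 'I_n -> rat) : (0 < DN prob)%N.
Proof. by rewrite /DN prodn_gt0 // => i; rewrite absz_gt0 denq_neq0. Qed.

Lemma probQ01 (R : realType) n tup prob IC Q t (M : {ffun {set 'I_n} -> R}) :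
  model tup prob IC M -> 0 <= probQ tup Q t M <= 1.
Proof.
move=> [[M0 [M1 _]] _]; rewrite /probQ; apply/andP; split.
  by apply: sumr_ge0.
rewrite -M1 [X in _ <= X](bigID (fun w => `[< sat_cq tup Q t w >])) /= lerDl.
by apply: sumr_ge0.
Qed.

Lemma frac_of (R : realType) n tup prob IC Q t (M : {ffun {set 'I_n} -> R}) :
  (0 < n)%N -> model tup prob IC M ->
  (forall d : {ffun {set 'I_n} -> R}, kdir d -> (forall w, M w = 0 -> d w = 0) -> forall w, d w = 0) ->
  bounded_fraction ((((n + 3)%N * max_numden prob) ^ (n + 3))%N) (probQ tup Q t M).
Proof.
move=> n0 mM ind.
have [Z [dz [dz0 [dzb eq]]]] := indep_frac Q t mM ind.
have /andP [p0 p1] := probQ01 Q t mM.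
set p := probQ tup Q t M in eq p0 p1 *.
have DN0 := DN_gt0 prob.
have a1 : (0 < max_numden prob)%N.
  case: n prob {tup M mM ind eq p p0 p1 dz0 dzb DN0} n0 => // k prob _.
  apply: leq_trans (@leq_bigmax _ (fun i : 'I_k.+1 => maxn `|numq (prob i)|%N `|denq (prob i)|%N) ord0).
  by apply: leq_trans (leq_maxr _ _); rewrite absz_gt0 denq_neq0.
have eqn : p * ((`|dz| * DN prob)%N)%:R = (`|Z|%N)%:R.
  have := congr1 (fun x : R => `|x|) eq => /=.
  by rewrite normrM (ger0_norm p0) normrM -!intr_norm -!natr_absz ger0_norm ?ler0n // natrM.
have dpos : (0 < `|dz| * DN prob)%N by rewrite muln_gt0 absz_gt0 dz0.
have dB : (`|dz| * DN prob <= ((n + 3)%N * max_numden prob) ^ (n + 3))%N.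
  apply: leq_trans (leq_mul (leq_trans dzb (leq_trans (leq_fact (_ : n.+1 <= n + 3)%N) (fact_le_pow _))) (leq_trans (DN_bound prob) (leq_pexp2l a1 (_ : n <= n + 3)%N))) _.
  + by rewrite addn3 ltnW.
  + by rewrite leq_addr.
  + by rewrite expnMn.
exists `|Z|%N, (`|dz| * DN prob)%N; split; [|split].
- apply: leq_trans dB.
  rewrite -(ler_nat R) -eqn; apply: le_trans (_ : p * _ <= 1 * _) _.
    by apply: ler_wpM2r.
  by rewrite mul1r.
- by rewrite dpos dB.
- by rewrite -eqn mulfK // pnatr_eq0 -lt0n.
Qed.

Theorem lemma2 (R : realType) (n : nat) (tup : 'I_n -> fact) (prob : 'I_n -> rat)
    (IC : seq denial) (Q : cq) (t : seq rat) (pmin pmax : R) :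
  injective tup ->
  (forall i, 0 <= prob i <= 1) ->
  consistent R tup prob IC ->
  (0 < size (cq_atoms Q))%N ->
  (exists w, sat_cq tup Q t w) ->
  is_min_prob tup prob IC Q t pmin ->
  is_max_prob tup prob IC Q t pmax ->
  let m := (n + 3)%N in
  let a := max_numden prob in
  bounded_fraction ((m * a) ^ m)%N pmin /\ bounded_fraction ((m * a) ^ m)%N pmax.
Proof.
move=> _ _ _ sz [w0 [nu [_ [hat _]]]] [[M1 [mM1 pM1]] Hmin] [[M2 [mM2 pM2]] Hmax] m a.
have n0 : (0 < n)%N.
  move: sz hat; case: (cq_atoms Q) => [|a0 rest] //= _ [[i _] _].
  exact: (leq_ltn_trans (leq0n _) (ltn_ord i)).
have [M [mM [pM ind]]] := reduce (or_introl Hmin) (leqnn _) mM1 pM1.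
have [M' [mM' [pM' ind']]] := reduce (or_intror Hmax) (leqnn _) mM2 pM2.
rewrite /m /a; split; [rewrite -pM | rewrite -pM']. apply: (frac_of _ _ n0 mM ind). apply: (frac_of _ _ n0 mM' ind').
Qed.
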